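(* For every $n\geq 1$ there exists a generalized NFA $M$ over a binary alphabet with $n$ states, each of which is both initial and final, such that the minimal (complete) DFA accepting $L(M)$ has $2^n$ states.
   Context: A generalized NFA is a quintuple $M=(Q,\Sigma,\delta,I,F)$ with finite state set $Q$, transition function $\delta: Q\times\Sigma\to 2^Q$, a set of initial states $I\subseteq Q$ and final states $F\subseteq Q$; it accepts $w$ iff $\delta(I,w)\cap F\neq\emptyset$. DFAs are required to be complete; the minimal DFA of a regular language is the complete DFA with fewest states accepting it. *)

(* Defs.v *)
From mathcomp Require Import all_boot.
Set Implicit Arguments. Unset Strict Implicit. Unset Printing Implicit Defensive.

Record gnfa (A : Type) (Q : finType) := GNFA {
  gnfa_delta : Q -> A -> {set Q};
  gnfa_init  : {set Q};
  gnfa_final : {set Q} }.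

Definition gnfa_step A Q (M : gnfa A Q) (S : {set Q}) (a : A) : {set Q} :=
  \bigcup_(q in S) gnfa_delta M q a.
Definition gnfa_run A Q (M : gnfa A Q) (S : {set Q}) (w : seq A) : {set Q} :=
  foldl (gnfa_step M) S w.
Definition gnfa_accepts A Q (M : gnfa A Q) (w : seq A) : bool :=
  gnfa_run M (gnfa_init M) w :&: gnfa_final M != set0.

Record dfa (A : Type) (Q : finType) := DFA {
  dfa_delta : Q -> A -> Q;
  dfa_start : Q;
  dfa_final : {set Q} }.
Definition dfa_run A Q (D : dfa A Q) (q : Q) (w : seq A) : Q :=
  foldl (dfa_delta D) q w.
Definition dfa_accepts A Q (D : dfa A Q) (w : seq A) : bool :=
  dfa_run D (dfa_start D) w \in dfa_final D.

Definition minimal_dfa_size (A : Type) (L : seq A -> bool) (k : nat) : Prop :=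
  (exists D : dfa A 'I_k, forall w, dfa_accepts D w = L w) /\
  (forall (m : nat) (D : dfa A 'I_m), (forall w, dfa_accepts D w = L w) -> k <= m).

(* Main.v *)
Require Import Defs.
From mathcomp Require Import all_boot.

Lemma card_setT' (T : finType) : #|{set T}| = 2 ^ #|T|.
Proof. by have := card_powerset [set: T]; rewrite powersetT !cardsT. Qed.

Definition sh {n} (n0 : 0 < n) k (x : 'I_n) : 'I_n := Ordinal (ltn_pmod (x + k) n0).

Definition Mex {n} (n0 : 0 < n) : gnfa bool 'I_n :=
  GNFA (fun q (c : bool) => if c then [set sh n0 1 q]
                            else if val q == 0 then set0 else [set q])
       setT setT.

Lemma run_cons A Q (M : gnfa A Q) X a w :
  gnfa_run M X (a :: w) = gnfa_run M (gnfa_step M X a) w.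
Proof. by []. Qed.

Lemma run_cat A Q (M : gnfa A Q) X u v :
  gnfa_run M X (u ++ v) = gnfa_run M (gnfa_run M X u) v.
Proof. exact: foldl_cat. Qed.

Lemma step_true n (n0 : 0 < n) X : gnfa_step (Mex n0) X true = sh n0 1 @: X.
Proof.
rewrite /gnfa_step /=; apply/setP=> y; apply/bigcupP/imsetP.
  by move=> [q qX /set1P ->]; exists q.
by move=> [q qX ->]; exists q => //; rewrite inE.
Qed.

Lemma step_false n (n0 : 0 < n) X :
  gnfa_step (Mex n0) X false = X :\: [set x | val x == 0].
Proof.
rewrite /gnfa_step /=; apply/setP=> y; rewrite !inE; apply/bigcupP/idP.
  move=> [q qX]; case: ifP => [_|/negbT q0]; first by rewrite inE.
  by move/set1P ->; rewrite q0 qX.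
by move=> /andP[y0 yX]; exists y => //; rewrite (negbTE y0) inE.
Qed.

Lemma sh_comp n (n0 : 0 < n) k l x : sh n0 k (sh n0 l x) = sh n0 (l + k) x.
Proof. by apply: val_inj => /=; rewrite modnDml addnA. Qed.

Lemma sh_n n (n0 : 0 < n) x : sh n0 n x = x.
Proof. by apply: val_inj => /=; rewrite modnDr modn_small. Qed.

Lemma sh_0 n (n0 : 0 < n) x : sh n0 0 x = x.
Proof. by apply: val_inj => /=; rewrite addn0 modn_small. Qed.

Lemma run_nseq n (n0 : 0 < n) k X :
  gnfa_run (Mex n0) X (nseq k true) = sh n0 k @: X.
Proof.
elim: k X => [|k IH] X.
  rewrite [LHS]/= -[LHS]imset_id; apply: eq_imset => x; by rewrite sh_0.
rewrite [nseq _ _]/= run_cons step_true IH -imset_comp; apply: eq_imset => x /=.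
by rewrite sh_comp add1n.
Qed.

Definition kill {n} (j : 'I_n) : seq bool := nseq (n - j) true ++ false :: nseq j true.

Lemma sh_eq0 n (n0 : 0 < n) (j y : 'I_n) : (val (sh n0 (n - j) y) == 0) = (y == j).
Proof.
have e : (j + (n - j)) %% n = 0 by rewrite subnKC ?modnn // ltnW.
by rewrite /= -e eqn_modDr !modn_small.
Qed.

Lemma run_kill n (n0 : 0 < n) X (j : 'I_n) :
  gnfa_run (Mex n0) X (kill j) = X :\ j.
Proof.
have K1 : cancel (sh n0 j) (sh n0 (n - j)).
  by move=> x; rewrite sh_comp subnKC ?sh_n // ltnW.
have K2 : cancel (sh n0 (n - j)) (sh n0 j).
  by move=> x; rewrite sh_comp subnK ?sh_n // ltnW.
rewrite run_cat run_nseq run_cons step_false run_nseq.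
rewrite (can2_imset_pre _ K1 K2) (can2_imset_pre _ K2 K1).
apply/setP=> y; rewrite !inE sh_eq0 K2.
by [].
Qed.

Lemma run_kills n (n0 : 0 < n) X (s : seq 'I_n) :
  gnfa_run (Mex n0) X (flatten (map (@kill n) s)) = X :\: [set x in s].
Proof.
elim: s X => [|j s IH] X /=.
  by apply/setP=> y; rewrite !inE.
rewrite run_cat run_kill IH; apply/setP=> y; rewrite !inE.
by case: (y == j); case: (y \in s); case: (y \in X).
Qed.

Definition wS {n} (S : {set 'I_n}) := flatten (map (@kill n) (enum (~: S))).
Definition vI {n} (i : 'I_n) := flatten (map (@kill n) (enum [set~ i])).

Lemma Lword n (n0 : 0 < n) (S : {set 'I_n}) i :
  gnfa_accepts (Mex n0) (wS S ++ vI i) = (i \in S).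
Proof.
rewrite /gnfa_accepts /= setIT run_cat /wS /vI !run_kills.
have -> : [set: 'I_n] :\: [set x in enum (~: S)] = S.
  by apply/setP=> y; rewrite !inE mem_enum !inE negbK andbT.
apply/set0Pn/idP => [[y]|iS].
  by rewrite !inE mem_enum !inE negbK => /andP[/eqP ->].
by exists i; rewrite !inE mem_enum !inE eqxx.
Qed.

Lemma subset_dfa {A} {Q : finType} (M : gnfa A Q) :
  exists D : dfa A 'I_(2 ^ #|Q|), forall w, dfa_accepts D w = gnfa_accepts M w.
Proof.
have e := card_setT' Q.
pose to (S : {set Q}) := cast_ord e (enum_rank S).
pose from (i : 'I_(2 ^ #|Q|)) := enum_val (cast_ord (esym e) i).
have fromK : forall S, from (to S) = S.
  by move=> S; rewrite /from /to cast_ordK enum_rankK.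
pose D := DFA (fun i a => to (gnfa_step M (from i) a)) (to (gnfa_init M))
              [set i | from i :&: gnfa_final M != set0].
exists D => w.
have run : forall X, dfa_run D (to X) w = to (gnfa_run M X w).
  rewrite /dfa_run /gnfa_run; elim: w => [|a w IH] X //=.
  by rewrite fromK IH.
by rewrite /dfa_accepts /= run inE fromK.
Qed.

Theorem mainTheorem12 :
  forall n : nat, 1 <= n ->
  exists M : gnfa bool 'I_n,
    gnfa_init M = [set: 'I_n] /\ gnfa_final M = [set: 'I_n] /\
    minimal_dfa_size (gnfa_accepts M) (2 ^ n).
Proof.
move=> n n0; exists (Mex n0); split; first by []; split; first by [].
split.
  by have := subset_dfa (Mex n0); rewrite card_ord.
move=> m D HD.
pose g (S : {set 'I_n}) := dfa_run D (dfa_start D) (wS S).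
have ginj : injective g.
  move=> S T eqST; apply/setP=> i.
  rewrite -!(@Lword n n0) -!HD /dfa_accepts /dfa_run !foldl_cat.
  have := eqST; rewrite /g /dfa_run => ->; by [].
by have := leq_card g ginj; rewrite card_setT' !card_ord.
Qed.
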